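(* There exist point sets $U_n\subset\mathbb{R}^2$ of size $n^2/4+\Theta(n)$ such that every rooted directed tree with $n$ vertices has a planar dominance drawing with its vertices placed at distinct points of $U_n$.
   Context: A rooted (directed) tree is a tree whose edges are directed away from the root toward the leaves. A dominance drawing places vertices at distinct points so that there is a directed path from $u$ to $v$ if and only if both coordinates of $v$ are greater than or equal to the corresponding coordinates of $u$; it is planar if, with edges drawn as straight-line segments, no two edges cross. *)

(* Defs.v *)
From HB Require Import structures.
From mathcomp Require Import all_boot all_order all_algebra.
From mathcomp Require Import finmap.
Set Implicit Arguments. Unset Strict Implicit. Unset Printing Implicit Defensive.
Import Order.TTheory GRing.Theory Num.Theory.
Local Open Scope ring_scope.

Definition rooted_tree (n : nat) (e : rel 'I_n) (r : 'I_n) : Prop :=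
  [/\ (forall x, ~~ e x r),
      (forall v, v != r -> #|[set u | e u v]| = 1%N)
    & (forall v, connect e r v)].

Definition on_segment (R : realFieldType) (a b z : R * R) : Prop :=
  exists t : R, 0 <= t <= 1 /\
    z = (a.1 + t * (b.1 - a.1), a.2 + t * (b.2 - a.2)).

Definition dominance_drawing (R : realFieldType) (n : nat) (e : rel 'I_n)
    (p : 'I_n -> R * R) : Prop :=
  injective p /\
  forall u v, connect e u v <-> ((p u).1 <= (p v).1 /\ (p u).2 <= (p v).2).

Definition planar_drawing (R : realFieldType) (n : nat) (e : rel 'I_n)
    (p : 'I_n -> R * R) : Prop :=
  forall a b c d, e a b -> e c d -> (a, b) != (c, d) ->
  forall z, on_segment (p a) (p b) z -> on_segment (p c) (p d) z ->
    z \in [:: p a; p b] /\ z \in [:: p c; p d].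

(* Main.v *)
Require Import Defs.
From HB Require Import structures.
From mathcomp Require Import all_boot all_order all_algebra.
From mathcomp Require Import finmap.
From mathcomp Require Import reals.
From mathcomp Require Import zify.
From mathcomp Require Import lra.
Import Order.TTheory GRing.Theory Num.Theory.
Set Implicit Arguments. Unset Strict Implicit.

Section Tree.
Variable n : nat.
Variable e : rel 'I_n.
Variable r : 'I_n.
Hypothesis hroot : forall x, ~~ e x r.
Hypothesis hpar : forall v, v != r -> #|[set u | e u v]| = 1%N.
Hypothesis hcon : forall v, connect e r v.

Definition par (v : 'I_n) : 'I_n := odflt v [pick u | e u v].

Lemma par_edge v : v != r -> e (par v) v.
Proof.
move=> /hpar h; rewrite /par; case: pickP => [u //|H].
have : #|[set u | e u v]| = 0%N by apply/eqP; rewrite cards_eq0; apply/eqP/setP => x; rewrite inE H in_set0.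
by rewrite h.
Qed.

Lemma edge_par a b : e a b -> par b = a /\ b != r.
Proof.
move=> eab; have nbr : b != r by apply/eqP => br; move: eab; rewrite br (negbTE (hroot a)).
split=> //; have := par_edge nbr; move: (hpar nbr) => /eqP/cards1P [x hx] e2.
have : a \in [set u | e u b] by rewrite inE.
have : par b \in [set u | e u b] by rewrite inE.
by rewrite hx !inE => /eqP -> /eqP ->.
Qed.

Notation anc := (connect e).

Lemma ancE u v : anc u v -> u = v \/ (v != r /\ anc u (par v)).
Proof.
move/connectP => [p pth ->]; elim/last_ind: p pth => [|p x IH] /=; first by left.
rewrite rcons_path => /andP [pth ex]; rewrite last_rcons; right.
have [-> nxr] := edge_par ex; split=> //; apply/connectP; by exists p.
Qed.

Lemma anc_par v : v != r -> anc (par v) v.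
Proof. by move=> h; apply: connect1; apply: par_edge. Qed.

Lemma ex_iter v : exists k, iter k par v == r.
Proof.
have := hcon v; move/connectP => [p pth ->]; elim/last_ind: p pth => [|p x IH] /=.
  by exists 0%N.
rewrite rcons_path => /andP [pth ex]; rewrite last_rcons.
have [px _] := edge_par ex; have [k hk] := IH pth; exists k.+1; by rewrite iterSr px.
Qed.

Definition dep v := ex_minn (ex_iter v).

Lemma dep_par v : v != r -> dep v = (dep (par v)).+1.
Proof.
move=> nvr; rewrite /dep; case: ex_minnP => k hk mk; case: ex_minnP => j hj mj.
case: k hk mk => [|k] hk mk; first by rewrite /= (negbTE nvr) in hk.
apply/eqP; rewrite eqn_leq; apply/andP; split.
  by apply: mk; rewrite iterSr.
by rewrite ltnS; apply: mj; rewrite -iterSr.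
Qed.

Lemma dep_r : dep r = 0%N.
Proof. rewrite /dep; case: ex_minnP => k hk mk; apply/eqP; rewrite -leqn0; exact: mk. Qed.

Lemma anc_r u : anc u r -> u = r.
Proof. by case/ancE => [//|[/eqP]]. Qed.

Lemma anc_dep_gen k u v : (dep v <= k)%N -> anc u v -> u != v -> (dep u < dep v)%N.
Proof.
elim: k v => [|k IH] v.
  rewrite leqn0 => /eqP d0 a nuv; case: (ancE a) => [/eqP|[nvr _]]; first by rewrite (negbTE nuv).
  by rewrite dep_par in d0.
move=> dk a nuv; case: (ancE a) => [/eqP|[nvr ap]]; first by rewrite (negbTE nuv).
rewrite (dep_par nvr); case: (eqVneq u (par v)) => [->//|nup].
apply: ltnW. rewrite ltnS; apply: (IH (par v)) => //.
by move: dk; rewrite dep_par.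
Qed.

Lemma anc_dep u v : anc u v -> u != v -> (dep u < dep v)%N.
Proof. exact: (anc_dep_gen (leqnn _)). Qed.

Lemma anc_dep_le u v : anc u v -> (dep u <= dep v)%N.
Proof. by move=> a; case: (eqVneq u v) => [->//|h]; apply: ltnW; apply: anc_dep. Qed.

Lemma anc_antisym u v : anc u v -> anc v u -> u = v.
Proof.
move=> a b; apply/eqP; apply/negPn/negP => h.
have := anc_dep a h; have := anc_dep_le b; lia.
Qed.

Lemma anc_lin_gen k a b v : (dep v <= k)%N -> anc a v -> anc b v -> anc a b \/ anc b a.
Proof.
elim: k v => [|k IH] v dk av bv.
  case: (ancE av) => [eav|[nvr _]]; first by subst; right.
  by move: dk; rewrite dep_par.
case: (ancE av) => [eav|[nvr ap]]; first by subst; right.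
case: (ancE bv) => [ebv|[_ bp]]; first by subst; left.
by apply: (IH (par v)) => //; move: dk; rewrite dep_par.
Qed.

Lemma anc_lin a b v : anc a v -> anc b v -> anc a b \/ anc b a.
Proof. exact: (anc_lin_gen (leqnn _)). Qed.

Lemma anc_parof a v : anc a v -> a != v -> v != r /\ anc a (par v).
Proof. by move=> av nav; case: (ancE av) => [/eqP|//]; rewrite (negbTE nav). Qed.

Lemma child_on_path_gen k a v : (dep v <= k)%N -> anc a v -> a != v ->
  exists c, [/\ c != r, par c = a & anc c v].
Proof.
elim: k v => [|k IH] v dk av nav; have [nvr ap] := anc_parof av nav.
  by move: dk; rewrite dep_par.
case: (eqVneq a (par v)) => [->|nap]; first by exists v.
have [|c [cr pc cp]] := IH (par v) _ ap nap; first by move: dk; rewrite dep_par.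
exists c; split=> //; apply: connect_trans cp (anc_par nvr).
Qed.

Lemma child_on_path a v : anc a v -> a != v -> exists c, [/\ c != r, par c = a & anc c v].
Proof. exact: (child_on_path_gen (leqnn _)). Qed.

Lemma sib_not_anc c c' : c != r -> c' != r -> par c = par c' -> c != c' -> ~ anc c c'.
Proof.
move=> cr c'r pp ncc a; have [_ h] := anc_parof a ncc.
have := anc_dep_le h; rewrite -pp (dep_par cr); lia.
Qed.


Definition sz (v : 'I_n) := #|[set z | anc v z]|.
Definition key2 (c : 'I_n) := (sz c * n + c)%N.
Definition heavy (c : 'I_n) := (c != r) &&
  [forall c' : 'I_n, ((c' != r) && (par c' == par c)) ==> (key2 c' <= key2 c)%N].
Definition key (c : 'I_n) := if heavy c then 0%N else (c : nat).+1.
Definition left (u v : 'I_n) := [exists c, exists c',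
  [&& c != r, c' != r, par c == par c', (key c < key c')%N, anc c u & anc c' v]].

Lemma leftP u v : reflect (exists c c', [/\ c != r, c' != r, par c = par c', (key c < key c')%N &
   anc c u /\ anc c' v]) (left u v).
Proof.
apply: (iffP existsP) => [[c /existsP [c' /and5P [h1 h2 /eqP h3 h4 /andP [h5 h6]]]]|[c [c' [h1 h2 h3 h4 [h5 h6]]]]].
  by exists c, c'.
by exists c; apply/existsP; exists c'; rewrite h1 h2 h3 eqxx h4 h5 h6.
Qed.


Lemma heavy_sib_ge h c : heavy h -> c != r -> par c = par h -> (sz c <= sz h)%N.
Proof.
move=> /andP [_ /forallP H] cr pc; move: (H c); rewrite cr pc eqxx /= /key2 => H1.
have := ltn_ord c; have := ltn_ord h; nia.
Qed.

Lemma heavy_nr h : heavy h -> h != r.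
Proof. by case/andP. Qed.

Lemma heavy_uniq h h' : heavy h -> heavy h' -> par h = par h' -> h = h'.
Proof.
move=> H H' p.
case/andP: (H) => hr /forallP F; case/andP: (H') => h'r /forallP F'.
move: (F h') (F' h); rewrite hr h'r p eqxx /= /key2 => a b.
have e1 : (sz h * n + h = sz h' * n + h')%N by apply/eqP; rewrite eqn_leq a b.
apply: val_inj => /=.
have : ((sz h * n + h) %% n = (sz h' * n + h') %% n)%N by rewrite e1.
by rewrite !modnMDl !modn_small.
Qed.

Lemma heavy_exists c : c != r -> exists h, heavy h /\ par h = par c.
Proof.
move=> cr.
have P0 : (fun h : 'I_n => (h != r) && (par h == par c)) c by rewrite cr eqxx.
case: (@arg_maxnP _ c (fun h : 'I_n => (h != r) && (par h == par c)) key2 P0) => h /andP [hr /eqP ph] M.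
exists h; split=> //; rewrite /heavy hr /=; apply/forallP => c'; apply/implyP => /andP [c'r /eqP pc'].
by apply: M; rewrite c'r pc' ph eqxx.
Qed.

Lemma key_neq c c' : c != r -> c' != r -> par c = par c' -> c != c' -> key c != key c'.
Proof.
move=> cr c'r p ncc; rewrite /key.
case: ifP => hc; case: ifP => hc' //.
  by move: ncc; rewrite (heavy_uniq hc hc' p) eqxx.
Qed.

Lemma key_heavy c : key c = 0%N -> heavy c.
Proof. by rewrite /key; case: ifP. Qed.

Lemma split_gen k u v : (dep u <= k)%N -> anc u v \/ anc v u \/
  exists c c', [/\ c != r, c' != r, par c = par c', c != c' & anc c u /\ anc c' v].
Proof.
elim: k u => [|k IH] u du.
  left; have -> : u = r.
    case: (eqVneq u r) => // nur; by move: du; rewrite dep_par.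
  exact: hcon.
case: (eqVneq u r) => [->|nur]; first by left; apply: hcon.
have dpu : (dep (par u) <= k)%N by move: du; rewrite dep_par.
case: (IH _ dpu) => [av|[va|[c [c' [h1 h2 h3 h4 [h5 h6]]]]]].
- case: (eqVneq (par u) v) => [<-|npv]; first by right; left; exact: anc_par.
  have [c' [c'r pc' ac']] := child_on_path av npv.
  case: (eqVneq c' u) => [<-|nc'u]; first by left.
  right; right; exists u, c'; split => //; by rewrite eq_sym.
- by right; left; apply: connect_trans va (anc_par nur).
- right; right; exists c, c'; split=> //; split=> //.
  exact: connect_trans h5 (anc_par nur).
Qed.

Lemma split_uv u v : anc u v \/ anc v u \/
  exists c c', [/\ c != r, c' != r, par c = par c', c != c' & anc c u /\ anc c' v].
Proof. exact: (@split_gen (dep u) u v (leqnn _)). Qed.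

Lemma trich u v : [\/ anc u v, anc v u, left u v | left v u].
Proof.
case: (split_uv u v) => [?|[?|[c [c' [h1 h2 h3 h4 [h5 h6]]]]]]; [by constructor 1|by constructor 2|].
have := key_neq h1 h2 h3 h4; rewrite neq_ltn => /orP [lt|lt].
  by constructor 3; apply/leftP; exists c, c'.
by constructor 4; apply/leftP; exists c', c; split.
Qed.

Lemma left_nanc u v : left u v -> ~ anc u v /\ ~ anc v u.
Proof.
case/leftP => c [c' [cr c'r p lt [cu c'v]]].
have ncc : c != c' by apply/eqP => E; move: lt; rewrite E ltnn.
have sna := sib_not_anc cr c'r p ncc.
have sna' := sib_not_anc c'r cr (esym p) (contra_neq esym ncc).
split=> a.
  by case: (anc_lin (connect_trans cu a) c'v).
by case: (anc_lin cu (connect_trans c'v a)).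
Qed.

Lemma lca_uniq u v c c' d d' :
  c != r -> c' != r -> par c = par c' -> c != c' -> anc c u -> anc c' v ->
  d != r -> d' != r -> par d = par d' -> d != d' -> anc d u -> anc d' v ->
  c = d /\ c' = d'.
Proof.
move=> cr c'r pc ncc cu c'v dr d'r pd ndd du d'v.
have sna := sib_not_anc cr c'r pc ncc.
have sna' := sib_not_anc c'r cr (esym pc) (contra_neq esym ncc).
have snd := sib_not_anc dr d'r pd ndd.
have snd' := sib_not_anc d'r dr (esym pd) (contra_neq esym ndd).
have ecd : c = d.
  case: (eqVneq c d) => // ncd; exfalso.
  case: (anc_lin cu du) => a.
    have [_ a2] := anc_parof a ncd; rewrite pd in a2.
    have cv : anc c v := connect_trans a2 (connect_trans (anc_par d'r) d'v).
    by case: (anc_lin cv c'v).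
  have [_ a2] := anc_parof a (contra_neq esym ncd); rewrite pc in a2.
  have dv : anc d v := connect_trans a2 (connect_trans (anc_par c'r) c'v).
  by case: (anc_lin dv d'v).
split=> //; subst d.
case: (eqVneq c' d') => // ncd.
have pp : par c' = par d' by rewrite -pc pd.
have s1 := sib_not_anc c'r d'r pp ncd.
have s2 := sib_not_anc d'r c'r (esym pp) (contra_neq esym ncd).
by case: (anc_lin c'v d'v).
Qed.

Lemma left_ncc c c' : (key c < key c')%N -> c != c'.
Proof. by move=> lt; apply/eqP => E; move: lt; rewrite E ltnn. Qed.

Lemma left_asym u v : left u v -> left v u -> False.
Proof.
case/leftP => c [c' [cr c'r p lt [cu c'v]]].
case/leftP => d [d' [dr d'r pd lt' [dv d'u]]].
have [E1 E2] := lca_uniq cr c'r p (left_ncc lt) cu c'v d'r dr (esym pd)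
  (contra_neq esym (left_ncc lt')) d'u dv.
by move: lt lt'; rewrite E1 E2 => a b; have := ltn_trans a b; rewrite ltnn.
Qed.

Lemma left_trans a b c : left a b -> left b c -> left a c.
Proof.
case/leftP => d1 [d1' [d1r d1'r p1 lt1 [d1a d1'b]]].
case/leftP => d2 [d2' [d2r d2'r p2 lt2 [d2b d2'c]]].
apply/leftP.
case: (eqVneq d1' d2) => [E|ne].
  subst d2; exists d1, d2'; split => //; [by rewrite p1 p2| exact: ltn_trans lt2].
case: (anc_lin d1'b d2b) => an.
  have [_ a2] := anc_parof an ne; rewrite p2 in a2.
  exists d1, d1'; split=> //; split=> //.
  exact: connect_trans a2 (connect_trans (anc_par d2'r) d2'c).
have [_ a2] := anc_parof an (contra_neq esym ne); rewrite -p1 in a2.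
exists d2, d2'; split=> //; split=> //.
exact: connect_trans a2 (connect_trans (anc_par d1r) d1a).
Qed.

Lemma left_ancr z u v : left z u -> anc u v -> left z v.
Proof.
case/leftP => c [c' [cr c'r p lt [cu c'v]]] a; apply/leftP; exists c, c'; split=> //; split=> //.
exact: connect_trans c'v a.
Qed.

Lemma left_ancl z u v : left u z -> anc u v -> left v z.
Proof.
case/leftP => c [c' [cr c'r p lt [cu c'v]]] a; apply/leftP; exists c, c'; split=> //; split=> //.
exact: connect_trans cu a.
Qed.

Definition Ls v := [set z | left z v].
Definition Rs v := [set z | left v z].
Definition Ap v := [set c | (c != r) && anc c v].
Definition HS := [set c | heavy c].
Definition X v := (#|Ls v| + #|Ap v :\: HS|)%N.
Definition Y v := (#|Rs v| + #|Ap v :&: HS|)%N.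

Lemma XY_sumA v : (X v + Y v = #|Ls v| + #|Rs v| + #|Ap v|)%N.
Proof. rewrite /X /Y -(cardsID HS (Ap v)); lia. Qed.

Lemma XY_anc u v : anc u v -> u != v -> [/\ (X u <= X v)%N, (Y u <= Y v)%N & (X u + Y u < X v + Y v)%N].
Proof.
move=> a nuv.
have sL : Ls u \subset Ls v by apply/subsetP => z; rewrite !inE => h; exact: left_ancr h a.
have sR : Rs u \subset Rs v by apply/subsetP => z; rewrite !inE => h; exact: left_ancl h a.
have sA : Ap u \subset Ap v by apply/subsetP => z; rewrite !inE => /andP [-> h]; exact: connect_trans h a.
have nvr : v != r by apply/eqP => E; subst v; move: nuv; rewrite (anc_r a) eqxx.
have pA : Ap u \proper Ap v.
  apply/properP; split=> //; exists v; first by rewrite inE nvr connect0.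
  rewrite inE negb_and; apply/orP; right; apply/negP => b.
  by move: nuv; rewrite (anc_antisym a b) eqxx.
have l1 := subset_leq_card sL; have l2 := subset_leq_card sR; have l3 := proper_card pA.
have l4 : (#|Ap u :\: HS| <= #|Ap v :\: HS|)%N by apply: subset_leq_card; apply: setSD.
have l5 : (#|Ap u :&: HS| <= #|Ap v :&: HS|)%N by apply: subset_leq_card; apply: setSI.
have := XY_sumA u; have := XY_sumA v; rewrite /X /Y in l1 l2 l3 l4 l5 *; split; lia.
Qed.



Lemma card_union_le (A B : {set 'I_n}) : (#|A :|: B| <= #|A| + #|B|)%N.
Proof. rewrite cardsU; lia. Qed.

Lemma card_union_disj (A B : {set 'I_n}) : (forall z, z \in A -> z \in B -> False) ->
  #|A :|: B| = (#|A| + #|B|)%N.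
Proof.
move=> D; rewrite cardsU; suff -> : A :&: B = set0 by rewrite cards0 subn0.
by apply/setP => z; rewrite !inE; apply/negP => /andP [a b]; apply: (D z).
Qed.

Lemma XY_left u v : left u v -> (X u < X v)%N /\ (Y v < Y u)%N.
Proof.
move=> luv; have := luv; case/leftP => cu [cv [cur cvr p lt [cuu cvv]]].
have ncc := left_ncc lt.
have sna := sib_not_anc cur cvr p ncc.
have sna' := sib_not_anc cvr cur (esym p) (contra_neq esym ncc).
have nhv : ~~ heavy cv by apply/negP => h; move: lt; rewrite /key h.
pose P := [set z | anc cu z && anc z u].
pose Q := [set z | anc cv z && anc z v].
have cuP : cu \in P by rewrite inE connect0 cuu.
have cvQ : cv \in Q by rewrite inE connect0 cvv.
split.
- have s1 : Ls u :|: P \subset Ls v.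
    apply/subsetP => z; rewrite !inE => /orP [h|/andP [a _]]; first exact: left_trans h luv.
    by apply/leftP; exists cu, cv.
  have d1 : #|Ls u :|: P| = (#|Ls u| + #|P|)%N.
    apply: card_union_disj => z; rewrite !inE => h /andP [_ a].
    by have [] := left_nanc h.
  have s2 : Ap u :\: HS \subset P :|: ((Ap v :\: HS) :\ cv).
    apply/subsetP => c; rewrite !inE => /andP [hc /andP [cr cu']].
    case: (boolP (anc cu c)) => [a|na] /=; first by rewrite cu'.
    have [a|a] := anc_lin cu' cuu; last by rewrite a in na.
    have ncu : c != cu by apply/eqP => E; move: na; rewrite E connect0.
    have [_ a2] := anc_parof a ncu; rewrite p in a2.
    have cv' : anc c cv := connect_trans a2 (anc_par cvr).
    rewrite hc cr (connect_trans cv' cvv) !andbT.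
    by apply/eqP => E; subst c.
  have c1 := subset_leq_card s1; have c2 := subset_leq_card s2.
  have c3 := card_union_le P ((Ap v :\: HS) :\ cv).
  have c4 := cardsD1 cv (Ap v :\: HS).
  have cvin : cv \in Ap v :\: HS by rewrite !inE nhv cvr cvv.
  rewrite cvin /= in c4.
  have c23 := leq_trans c2 c3.
  rewrite d1 in c1; rewrite /X c4 add1n addnS ltnS.
  apply: leq_trans (leq_add (leqnn _) c23) _; rewrite addnA leq_add2r; exact: c1.
- have s1 : Rs v :|: Q \subset Rs u.
    apply/subsetP => z; rewrite !inE => /orP [h|/andP [a _]]; first exact: left_trans luv h.
    by apply/leftP; exists cu, cv.
  have d1 : #|Rs v :|: Q| = (#|Rs v| + #|Q|)%N.
    apply: card_union_disj => z; rewrite !inE => h /andP [_ a].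
    by have [] := left_nanc h.
  have s2 : Ap v :&: HS \subset (Q :\ cv) :|: (Ap u :&: HS).
    apply/subsetP => c; rewrite !inE => /andP [/andP [cr cv'] hc].
    case: (boolP (anc cv c)) => [a|na] /=.
      rewrite cv' andbT; apply/orP; left; apply/eqP => E; subst c.
      by rewrite hc in nhv.
    have [a|a] := anc_lin cv' cvv; last by rewrite a in na.
    have ncv : c != cv by apply/eqP => E; move: na; rewrite E connect0.
    have [_ a2] := anc_parof a ncv; rewrite -p in a2.
    by rewrite hc cr (connect_trans a2 (connect_trans (anc_par cur) cuu)) orbT.
  have c1 := subset_leq_card s1; have c2 := subset_leq_card s2.
  have c3 := card_union_le (Q :\ cv) (Ap u :&: HS).
  have c4 := cardsD1 cv Q.
  rewrite cvQ /= in c4.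
  have c23 := leq_trans c2 c3.
  rewrite d1 c4 in c1; rewrite /Y.
  apply: (@leq_trans (#|Rs v| + (#|Q :\ cv| + #|Ap u :&: HS|)).+1).
    by rewrite ltnS leq_add2l.
  have := leq_add c1 (leqnn #|Ap u :&: HS|).
  by rewrite add1n addnS addSn addnA.
Qed.

Lemma XY_total v : (X v + Y v + sz v = n)%N.
Proof.
pose Anc := [set c | anc c v]; pose D := [set z | anc v z].
have e1 : #|Anc| = (1 + #|Ap v|)%N.
  rewrite (cardsD1 r Anc) inE hcon; congr (_ + _)%N; apply: eq_card => z.
  by rewrite !inE.
have e2 : #|Anc :&: D| = 1%N.
  suff -> : Anc :&: D = [set v] by rewrite cards1.
  apply/setP => z; rewrite !inE; apply/andP/eqP => [[a b]|->]; last by rewrite connect0.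
  exact: anc_antisym.
have e3 : #|Anc :|: D| = (#|Anc| + #|D| - 1)%N by rewrite cardsU e2.
have e4 : #|(Ls v :|: Rs v) :|: (Anc :|: D)| = (#|Ls v| + #|Rs v| + #|Anc :|: D|)%N.
  rewrite card_union_disj; last first.
    move=> z; rewrite !inE => /orP [h|h] /orP [a|a]; have [] := left_nanc h; done.
  rewrite card_union_disj // => z; rewrite !inE => h1 h2; exact: left_asym h1 h2.
have e5 : (Ls v :|: Rs v) :|: (Anc :|: D) = [set: 'I_n].
  apply/setP => z; rewrite !inE; case: (trich z v) => h; rewrite h ?orbT //.
have e6 : #|Anc| + #|D| >= 1.
  rewrite e1; lia.
rewrite e5 cardsT card_ord in e4.
have := XY_sumA v; rewrite /sz -/D.
move: e1 e3 e4 e6; clear; lia.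
Qed.

Lemma X_prop v : X v = 0%N \/ (sz v <= X v)%N.
Proof.
case: (set_0Vmem (Ap v :\: HS)) => [E|[c hc]].
  left; rewrite /X E cards0 addn0; apply/eqP; rewrite cards_eq0; apply/eqP/setP => z.
  rewrite !inE; apply/negbTE/negP; case/leftP => c [c' [cr c'r p lt [_ c'v]]].
  have : c' \in Ap v :\: HS.
    rewrite !inE c'r c'v andbT; rewrite andbT; apply/negP => h; move: lt; rewrite /key h.
    by case: ifP.
  by rewrite E inE.
right; move: hc; rewrite !inE => /andP [nh /andP [cr cv]].
have [h [hh ph]] := heavy_exists cr.
have s1 : [set z | anc h z] \subset Ls v.
  apply/subsetP => z; rewrite !inE => a; apply/leftP; exists h, c; split=> //.
    exact: heavy_nr.
  by rewrite /key hh (negbTE nh).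
have l1 := subset_leq_card s1.
have l2 := heavy_sib_ge hh cr (esym ph).
have l3 : (sz v <= sz c)%N.
  apply: subset_leq_card; apply/subsetP => z; rewrite !inE => a; exact: connect_trans cv a.
rewrite /X; apply: leq_trans l3 _; apply: leq_trans l2 _; apply: leq_trans l1 _.
exact: leq_addr.
Qed.

Variable R : realType.
Local Open Scope ring_scope.

Definition pt (v : 'I_n) : R * R := ((X v)%:R, (Y v)%:R).

Lemma pt_dom u v : connect e u v <-> ((pt u).1 <= (pt v).1 /\ (pt u).2 <= (pt v).2).
Proof.
rewrite /pt /= !ler_nat; split.
  move=> a; case: (eqVneq u v) => [->|nuv]; first by rewrite !leqnn.
  by have [] := XY_anc a nuv.
move=> [h1 h2]; case: (trich u v) => // [a|h|h].
- case: (eqVneq v u) => [->|nvu]; first exact: connect0.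
  have [l1 l2 l3] := XY_anc a nvu; exfalso; move: l3 h1 h2; clear; lia.
- by have [_ l] := XY_left h; exfalso; move: l h2; clear; lia.
- by have [l _] := XY_left h; exfalso; move: l h1; clear; lia.
Qed.

Lemma pt_inj : injective pt.
Proof.
move=> u v /eqP; rewrite /pt xpair_eqE !eqr_nat => /andP [/eqP h1 /eqP h2].
apply/eqP; apply/negP => /negP nuv.
case: (trich u v) => [a|a|h|h].
- by have [_ _ l] := XY_anc a nuv; move: l; rewrite h1 h2 ltnn.
- by have [_ _ l] := XY_anc a (contra_neq esym nuv); move: l; rewrite h1 h2 ltnn.
- by have [l _] := XY_left h; move: l; rewrite h1 ltnn.
- by have [l _] := XY_left h; move: l; rewrite h1 ltnn.
Qed.

Lemma seg_box (P Q z : R * R) : on_segment P Q z -> P.1 <= Q.1 -> P.2 <= Q.2 ->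
  (P.1 <= z.1 <= Q.1) /\ (P.2 <= z.2 <= Q.2).
Proof.
case=> t [/andP [t0 t1] ->] /= h1 h2.
have key1 : forall x y : R, x <= y -> x <= x + t * (y - x) <= y.
  move=> x y xy; have k1 : 0 <= t * (y - x) by apply: mulr_ge0; rewrite // subr_ge0.
  have k2 : t * (y - x) <= y - x.
    by rewrite -[leRHS]mul1r; apply: ler_wpM2r; rewrite // subr_ge0.
  apply/andP; split; lra.
by split; apply: key1.
Qed.

Lemma aux_le (t t' B D a : R) : 0 < t' -> t <= t' -> 0 <= B -> t * B = t' * D -> a + D <= a + B.
Proof.
move=> tp tt B0 E; rewrite lerD2l -(ler_pM2l tp) -E; exact: ler_wpM2r.
Qed.

Lemma pt_planar : planar_drawing e pt.
Proof.
move=> a b c d eab ecd neq z sab scd.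
have [pba nbr] := edge_par eab; have [pdc ndr] := edge_par ecd.
have [lab1 lab2] := (pt_dom a b).1 (connect1 eab).
have [lcd1 lcd2] := (pt_dom c d).1 (connect1 ecd).
have [/andP [za1 zb1] /andP [za2 zb2]] := seg_box sab lab1 lab2.
have [/andP [zc1 zd1] /andP [zc2 zd2]] := seg_box scd lcd1 lcd2.
have zeq : forall w, z.1 = (pt w).1 -> z.2 = (pt w).2 -> z = pt w.
  move=> w h1 h2; rewrite [z]surjective_pairing h1 h2; by case: (pt w).
case: (eqVneq a c) => [ac|nac].
  rewrite -{}ac in neq scd lcd1 lcd2 zc1 zd1 zc2 zd2 ecd pdc *.
  have nbd : b != d by apply/eqP => E; move: neq; rewrite E eqxx.
  move: sab scd => [t [/andP [t0 t1] zt]] [t' [/andP [t0' t1'] zt']].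
  have [t00|tpos] := eqVneq t 0.
    have -> : z = pt a by rewrite zt t00 !mul0r !addr0; case: (pt a).
    by rewrite !inE !eqxx.
  have [t00|tpos'] := eqVneq t' 0.
    have -> : z = pt a by rewrite zt' t00 !mul0r !addr0; case: (pt a).
    by rewrite !inE !eqxx.
  have tp : 0 < t by rewrite lt_def tpos t0.
  have tp' : 0 < t' by rewrite lt_def tpos' t0'.
  have e1 : t * ((pt b).1 - (pt a).1) = t' * ((pt d).1 - (pt a).1).
    by move/(congr1 fst): zt; rewrite {1}zt' /= => /addrI.
  have e2 : t * ((pt b).2 - (pt a).2) = t' * ((pt d).2 - (pt a).2).
    by move/(congr1 snd): zt; rewrite {1}zt' /= => /addrI.
  have B1 : 0 <= (pt b).1 - (pt a).1 by rewrite subr_ge0.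
  have B2 : 0 <= (pt b).2 - (pt a).2 by rewrite subr_ge0.
  have D1 : 0 <= (pt d).1 - (pt a).1 by rewrite subr_ge0.
  have D2 : 0 <= (pt d).2 - (pt a).2 by rewrite subr_ge0.
  have sib1 := sib_not_anc nbr ndr (etrans pba (esym pdc)) nbd.
  have sib2 := sib_not_anc ndr nbr (etrans pdc (esym pba)) (contra_neq esym nbd).
  exfalso; case: (lerP t t') => tt.
    apply: sib2; apply/pt_dom; split.
      by have := aux_le (pt a).1 tp' tt B1 e1; rewrite !(addrC (pt a).1) !subrK.
    by have := aux_le (pt a).2 tp' tt B2 e2; rewrite !(addrC (pt a).2) !subrK.
  apply: sib1; apply/pt_dom; split.
    by have := aux_le (pt a).1 tp (ltW tt) D1 (esym e1); rewrite !(addrC (pt a).1) !subrK.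
  by have := aux_le (pt a).2 tp (ltW tt) D2 (esym e2); rewrite !(addrC (pt a).2) !subrK.
case: (eqVneq b d) => [bd|nbd].
  by subst d; move: nac; rewrite -pba -pdc eqxx.
case: (eqVneq b c) => [bc|nbc].
  rewrite -{}bc in zc1 zc2 *; have -> : z = pt b by apply: zeq; apply/eqP; rewrite eq_le ?zb1 ?zb2 ?zc1 ?zc2.
  by rewrite !inE !eqxx ?orbT.
case: (eqVneq a d) => [ad|nad].
  subst d; have -> : z = pt a by apply: zeq; apply/eqP; rewrite eq_le ?za1 ?za2 ?zd1 ?zd2.
  by rewrite !inE !eqxx ?orbT.
exfalso.
have ad : connect e a d by apply/pt_dom; split; [exact: le_trans za1 zd1 | exact: le_trans za2 zd2].
have cb : connect e c b by apply/pt_dom; split; [exact: le_trans zc1 zb1 | exact: le_trans zc2 zb2].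
have [_ h1] := anc_parof cb (contra_neq esym nbc); rewrite pba in h1.
have [_ h2] := anc_parof ad nad; rewrite pdc in h2.
by move: nac; rewrite (anc_antisym h2 h1) eqxx.
Qed.

End Tree.

Definition Useq (n : nat) : seq (nat * nat) :=
  [seq (0%N, b) | b <- iota 0 n] ++
  [seq ((u + w).+1, (n - 2 - 2 * u - w)%N) | u <- iota 0 n./2, w <- iota 0 (n - 1 - 2 * u)].

Lemma half_le n : (2 * n./2 <= n)%N.
Proof. have := odd_double_half n; rewrite -muln2; lia. Qed.

Lemma sumn_tri n k : (2 * k <= n)%N ->
  sumn [seq (n - 1 - 2 * u)%N | u <- iota 0 k] = (k * (n - k))%N.
Proof.
elim: k => [//|k IH] hk.
rewrite -[k.+1]addn1 iotaD map_cat sumn_cat /= IH; last lia.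
nia.
Qed.

Lemma size_Useq n : size (Useq n) = (n + n./2 * (n - n./2))%N.
Proof.
rewrite size_cat size_map size_iota size_allpairs_dep; congr (_ + _)%N.
rewrite -(sumn_tri (half_le n)); congr sumn; apply: eq_map => u; by rewrite size_iota.
Qed.

Lemma uniq_Useq n : uniq (Useq n).
Proof.
rewrite cat_uniq; apply/and3P; split.
- rewrite map_inj_uniq ?iota_uniq //; by move=> x y [].
- apply/hasPn => x /allpairsPdep [u [w [_ _ ->]]]; apply/negP => /mapP [b _] //.
- apply: allpairs_uniq_dep => //; first exact: iota_uniq.
    by move=> u _; exact: iota_uniq.
  move=> [u w] [u' w'] /allpairsPdep [u1 [w1 [h1 h2 E1]]] /allpairsPdep [u2 [w2 [h3 h4 E2]]] /= [].
  move: E1 E2 => [-> ->] [-> ->].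
  rewrite !mem_iota /= in h1 h2 h3 h4.
  have := half_le n => hh.
  move=> ea eb.
  have eu : u1 = u2 by lia.
  subst u2; have ew : w1 = w2 by lia.
  by subst w2.
Qed.

Lemma mem_Useq n x y s : (x + y + s = n)%N -> (1 <= s)%N -> (x = 0%N \/ (s <= x)%N) ->
  (x, y) \in Useq n.
Proof.
move=> H s1 [->|sx]; rewrite mem_cat; apply/orP.
  left; apply/mapP; exists y => //; rewrite mem_iota; lia.
right; apply/allpairsPdep; exists (s - 1)%N, (x - s)%N; split.
- have := odd_double_half n; rewrite -muln2 mem_iota; lia.
- rewrite mem_iota; lia.
- congr pair; lia.
Qed.

Definition natpt (R : realType) (ab : nat * nat) : R * R := ((ab.1)%:R, (ab.2)%:R)%R.


Local Open Scope ring_scope.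
Local Open Scope fset_scope.

Theorem theorem15 (R : realType) :
  exists U : nat -> {fset (R * R)},
    (exists (c1 c2 : R) (N : nat), 0 < c1 /\ 0 < c2 /\
       forall n : nat, (N <= n)%N ->
         c1 * n%:R <= (#|` U n|)%:R - n%:R ^+ 2 / 4%:R <= c2 * n%:R) /\
    (forall (n : nat) (e : rel 'I_n) (r : 'I_n), rooted_tree e r ->
       exists p : 'I_n -> R * R,
         (forall v, p v \in U n) /\ dominance_drawing e p /\ planar_drawing e p).
Proof.
exists (fun n => [fset y in map (@natpt R) (Useq n)]).
have card : forall n, #|` [fset y in map (@natpt R) (Useq n)]| = (n + n./2 * (n - n./2))%N.
  move=> n; rewrite card_fseq undup_id ?size_map ?size_Useq //.
  rewrite map_inj_uniq ?uniq_Useq // => [[a b] [c d]] /= [].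
  by move=> /eqP; rewrite eqr_nat => /eqP -> /eqP; rewrite eqr_nat => /eqP ->.
split.
  exists (1/2), 1, 1%N; split; first lra. split; first lra.
  move=> n hn; rewrite card.
  have hk := half_le n.
  have E := odd_double_half n.
  rewrite natrD natrM natrB; last lia.
  move: E hn; set k := n./2; case: (odd n) => /= E hn.
    have En : (n%:R : R) = (1 + k%:R * 2)%R by rewrite -E -muln2 natrD natrM.
    have k0 : ((0 : R) <= k%:R)%R by rewrite ler0n.
    rewrite En; apply/andP; split; nra.
  have En : (n%:R : R) = (k%:R * 2)%R by rewrite -E -muln2 natrM.
  have k1 : (1 <= k)%N by lia.
  have k1' : ((1 : R) <= k%:R)%R by rewrite ler1n.
  rewrite En; apply/andP; split; nra.
move=> n e r [hroot hpar hcon].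
exists (pt e r R); split.
  move=> v; rewrite inE; change (natpt R (X e r v, Y e r v) \in [seq natpt R i | i <- Useq n]); apply: map_f.
  apply: mem_Useq (XY_total hroot hpar hcon v) _ (X_prop e r v).
  rewrite /sz card_gt0; apply/set0Pn; exists v; by rewrite inE connect0.
split.
  split; first exact (@pt_inj n e r hroot hpar hcon R).
  move=> u v; exact (@pt_dom n e r hroot hpar hcon R u v).
exact (@pt_planar n e r hroot hpar hcon R).
Qed.
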